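(* Let $\Delta$ be the $d$-simplex, i.e., the simplicial complex with vertex set $[d+1]$ containing all subsets of $[d+1]$ as faces. Then there is a sequence of elementary $2$-collapses that starts with $\Delta$ and ends with the simplicial complex whose faces are the empty set and the singletons $\{i\}$, $i \in [d+1]$ (all vertices of $\Delta$ and no faces of higher dimension).
   Context: Elementary $2$-collapse: if ${\sf K}$ is a simplicial complex and $\sigma, \tau \in {\sf K}$ satisfy (i) $\dim \sigma \leq 1$, (ii) $\tau$ is an inclusion-maximal face of ${\sf K}$, (iii) $\sigma \subseteq \tau$, and (iv) $\tau$ is the only face of ${\sf K}$ satisfying (ii) and (iii), then ${\sf K}' := {\sf K} \setminus \{\eta \in {\sf K} : \sigma \subseteq \eta \subseteq \tau\}$ arises from ${\sf K}$ by an elementary $2$-collapse. *)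

(* Defs.v *)
From mathcomp Require Import all_boot.
Set Implicit Arguments. Unset Strict Implicit. Unset Printing Implicit Defensive.

(* A simplicial complex on a finite vertex type T is represented by its set of
   faces, K : {set {set T}}. Dimension of a face sigma is #|sigma| - 1. *)

Definition maximal_face (T : finType) (K : {set {set T}}) (tau : {set T}) : bool :=
  (tau \in K) && [forall eta in K, ~~ (tau \proper eta)].

Definition elem_2collapse (T : finType) (K K' : {set {set T}}) : Prop :=
  exists sigma tau : {set T},
    [/\ sigma \in K /\ #|sigma| <= 2,
        maximal_face K tau,
        sigma \subset tau,
        (forall tau', maximal_face K tau' -> sigma \subset tau' -> tau' = tau) &
        K' = K :\: [set eta in K | (sigma \subset eta) && (eta \subset tau)]].

Definition collapse_seq (T : finType) (K K' : {set {set T}}) : Prop :=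
  exists s : seq {set {set T}},
    (forall i, i < size s ->
       elem_2collapse (nth K (K :: s) i) (nth K (K :: s) i.+1)) /\
    last K s = K'.

Definition simplex (T : finType) : {set {set T}} := [set: {set T}].

Definition vertices_complex (T : finType) : {set {set T}} :=
  set0 |: [set [set i] | i : T].

(* Main.v *)
Require Import Defs.
From mathcomp Require Import all_boot.
From mathcomp Require Import zify.
Set Implicit Arguments. Unset Strict Implicit. Unset Printing Implicit Defensive.

Definition flag (T : finType) (R : rel T) : {set {set T}} :=
  [set eta : {set T} | [forall x in eta, forall y in eta, ~~ R x y]].

Lemma flagP (T : finType) (R : rel T) (eta : {set T}) :
  reflect (forall x y, x \in eta -> y \in eta -> ~~ R x y) (eta \in flag R).
Proof.
rewrite inE; apply: (iffP forallP) => [H x y hx hy | H x].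
  by move: (H x); rewrite hx /= => /forallP /(_ y); rewrite hy.
by apply/implyP => hx; apply/forallP => y; apply/implyP => hy; apply: H.
Qed.

Lemma memsep (T : finType) (A : {set T}) (P : pred T) x :
  (x \in [set y in A | P y]) = (x \in A) && P x.
Proof. by rewrite inE. Qed.

Lemma step (T : finType) (R R' : rel T) (a b : T) :
  (forall x, ~~ R x x) -> (forall x y, R x y = R y x) -> a != b -> ~~ R a b ->
  (forall x y, R' x y = R x y || ((x == a) && (y == b)) || ((x == b) && (y == a))) ->
  (forall c c', ~~ R a c -> ~~ R b c -> ~~ R a c' -> ~~ R b c' -> ~~ R c c') ->
  elem_2collapse (flag R) (flag R').
Proof.
move=> irr sym nab Rab HR' cl.
pose N := [set c | ~~ R a c && ~~ R b c].
have aN : a \in N by rewrite inE irr sym Rab.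
have bN : b \in N by rewrite inE Rab irr.
have NK : N \in flag R.
  apply/flagP => x y; rewrite !inE => /andP[h1 h2] /andP[h3 h4]; exact: cl.
have sabN : [set a; b] \subset N by apply/subsetP => x; rewrite !inE => /orP[]/eqP->; rewrite ?irr ?Rab // sym.
have maxN : maximal_face (flag R) N.
  rewrite /maximal_face NK /=; apply/forallP => eta; apply/implyP => /flagP Heta.
  apply/negP => /properP [sub [x xe xN]].
  move: xN; rewrite inE.
  have ha := subsetP sub a aN; have hb := subsetP sub b bN.
  by rewrite (Heta a x) //= (Heta b x).
exists [set a; b], N; split => //.
- split; last by rewrite cards2 nab.
  apply/flagP => x y; rewrite !inE => /orP[]/eqP-> /orP[]/eqP->;
    by rewrite ?irr // sym.
- move=> tau' /andP[tK /forallP mt] sub.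
  have tN : tau' \subset N.
    apply/subsetP => x xt; move/flagP: tK => tK.
    by rewrite inE !tK // (subsetP sub) // !inE eqxx ?orbT.
  move: (mt N); rewrite NK /= properEneq tN andbT negbK => /eqP //.
- apply/setP => eta; rewrite in_setD memsep.
  apply/idP/idP.
  + move/flagP => H.
    have HK : eta \in flag R.
      by apply/flagP => x y hx hy; move: (H x y hx hy); rewrite HR' negb_or => /andP[/norP[]].
    rewrite HK andbT /=; apply/negP => /andP[/subsetP s _].
    have ha : a \in eta by apply: s; rewrite !inE eqxx.
    have hb : b \in eta by apply: s; rewrite !inE eqxx orbT.
    by move: (H a b ha hb); rewrite HR' !eqxx /= orbT.
  + move=> /andP[H HK]; move: H.
    have hK := HK; move/flagP: HK => HK.
    rewrite hK /= => H; apply/flagP => x y hx hy.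
    rewrite HR' -orbA negb_or HK //=.
    apply/negP => /orP[] /andP[/eqP ex /eqP ey]; subst x y;
    move: H; rewrite negb_and; move/orP => [] /negP; apply.
    * by apply/subsetP => z; rewrite !inE => /orP[]/eqP->.
    * apply/subsetP => z ze; rewrite inE.
      by rewrite (HK a z) ?(HK b z).
    * by apply/subsetP => z; rewrite !inE => /orP[]/eqP->.
    * apply/subsetP => z ze; rewrite inE.
      by rewrite (HK a z) ?(HK b z).
Qed.

Lemma cs_refl (T : finType) (K : {set {set T}}) : collapse_seq K K.
Proof. by exists [::]; split. Qed.

Lemma cs_snoc (T : finType) (K K1 K2 : {set {set T}}) :
  collapse_seq K K1 -> elem_2collapse K1 K2 -> collapse_seq K K2.
Proof.
move=> [s [Hs Hl]] H12; exists (rcons s K2); split; last by rewrite last_rcons.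
move=> i; rewrite size_rcons ltnS leq_eqVlt => /orP[/eqP ->|lt].
  rewrite -rcons_cons !nth_rcons /= ltnSn ltnn eqxx.
  suff -> : nth K (K :: s) (size s) = K1 by [].
  by rewrite -Hl; case: s {Hs Hl} => //= x s; rewrite nth_last.
rewrite -rcons_cons !nth_rcons /= ltnS ltnW // ltnS lt.
exact: Hs.
Qed.

Lemma mulle (n m m' : nat) : m < m' -> m.+1 * n <= m' * n.
Proof. by move=> h; rewrite leq_mul2r h orbT. Qed.
Lemma keyinj n m M m' M' : M < n -> M' < n -> m*n+M = m'*n+M' -> m = m' /\ M = M'.
Proof.
move=> h1 h2 e; case: (ltngtP m m') => h.
- have := mulle n h; rewrite mulSn; lia.
- have := mulle n h; rewrite mulSn; lia.
- subst; lia.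
Qed.
Definition key n (x y : nat) := minn x y * n + maxn x y.
Lemma cl n a b c c' : a < n -> b < n -> c < n -> c' < n -> a != b ->
  ~~ ((a != c) && (key n a c < key n a b)) ->
  ~~ ((b != c) && (key n b c < key n a b)) ->
  ~~ ((a != c') && (key n a c' < key n a b)) ->
  ~~ ((b != c') && (key n b c' < key n a b)) ->
  ~~ ((c != c') && (key n c c' < key n a b)).
Proof.
rewrite /key => ha hb hc hc' nab h1 h2 h3 h4.
wlog lab : a b ha hb nab h1 h2 h3 h4 / a < b.
  move=> H; case: (boolP (a < b)) => l; first by apply: (H a b).
  have lba : b < a by move: nab l; clear; lia.
  rewrite (minnC a b) (maxnC a b); apply: (H b a) => //; try by rewrite eq_sym.
  1-4: by rewrite ?(minnC b a) ?(maxnC b a).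
rewrite (minn_idPl (ltnW lab)) (maxn_idPr (ltnW lab)) in h1 h2 h3 h4 *.
have big : forall z, z < n -> ~~ ((a != z) && (minn a z * n + maxn a z < a * n + b)) ->
    ~~ ((b != z) && (minn b z * n + maxn b z < a * n + b)) -> z = a \/ z = b \/ b < z.
  move=> z hz g1 g2; case: (ltngtP z a) => za.
  - have := mulle n za; rewrite mulSn => m. exfalso; move: g1; rewrite (minn_idPr (ltnW za)) (maxn_idPl (ltnW za)); lia.
  - case: (ltngtP z b) => zb; last by lia.
    + exfalso; move: g1; rewrite (minn_idPl (ltnW za)) (maxn_idPr (ltnW za)); lia.
    + lia.
  - lia.
have sym : forall u v, minn u v * n + maxn u v = minn v u * n + maxn v u by move=> u v; rewrite minnC maxnC.
case: (big c hc h1 h2) => [->|[->|bc]] //.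
case: (big c' hc' h3 h4) => [->|[->|bc']].
  by rewrite sym eq_sym.
  by rewrite sym eq_sym.
case: (ltngtP c c') => cc'; last by subst; rewrite ?eqxx //=; lia.
- have := mulle n (ltn_trans lab (leq_ltn_trans (leqnn b) bc)); rewrite mulSn => m.
  have : a.+1 * n <= c * n by rewrite leq_mul2r; apply/orP; right; lia.
  rewrite mulSn; lia.
- idtac.
  have : a.+1 * n <= c' * n by rewrite leq_mul2r; apply/orP; right; lia.
  rewrite mulSn; lia.
Qed.

Lemma keyinj2 n u v x y : u < n -> v < n -> x < n -> y < n ->
  key n u v = key n x y -> (u = x /\ v = y) \/ (u = y /\ v = x).
Proof.
rewrite /key => hu hv hx hy e.
have h1 : maxn u v < n by lia.
have h2 : maxn x y < n by lia.
have [e1 e2] := keyinj h1 h2 e.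
lia.
Qed.

Definition rem n t : rel 'I_n := fun x y => (x != y) && (key n x y < t).

Lemma rem_irr n t (x : 'I_n) : ~~ rem t x x.
Proof. by rewrite /rem eqxx. Qed.

Lemma rem_sym n t (x y : 'I_n) : rem t x y = rem t y x.
Proof. by rewrite /rem /key eq_sym minnC maxnC. Qed.

Lemma main_t n : forall t, collapse_seq (simplex 'I_n) (flag (@rem n t)).
Proof.
elim=> [|t IH].
  have -> : flag (@rem n 0) = simplex 'I_n.
    by apply/setP => e; rewrite /simplex in_setT; apply/flagP => x y _ _; rewrite /rem ltn0 andbF.
  exact: cs_refl.
case: (boolP [exists x : 'I_n, exists y : 'I_n, (x != y) && (key n x y == t)]).
- case/existsP => x /existsP [y /andP [nxy /eqP kxy]].
  apply: cs_snoc IH _; apply: (step (a := x) (b := y)).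
  + exact: rem_irr.
  + exact: rem_sym.
  + exact: nxy.
  + by rewrite /rem kxy ltnn andbF.
  + move=> u v; rewrite /rem ltnS leq_eqVlt andb_orr orbC.
    rewrite -orbA; congr (_ || _).
    apply/idP/idP.
    * move=> /andP[nuv /eqP kuv]; rewrite -kxy in kuv.
      have [[e1 e2]|[e1 e2]] := keyinj2 (ltn_ord u) (ltn_ord v) (ltn_ord x) (ltn_ord y) kuv.
      - by apply/orP; left; rewrite -!val_eqE /= e1 e2 !eqxx.
      - by apply/orP; right; rewrite -!val_eqE /= e1 e2 !eqxx.
    * move=> /orP[]/andP[/eqP -> /eqP ->]; first by rewrite kxy eqxx nxy.
      by rewrite eq_sym nxy /key minnC maxnC -/(key n x y) kxy eqxx.
  + move=> c c'; rewrite /rem -kxy -!val_eqE /= => h1 h2 h3 h4.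
    have := @cl n x y c c' (ltn_ord x) (ltn_ord y) (ltn_ord c) (ltn_ord c').
    by rewrite val_eqE; apply.
- rewrite negb_exists => /forallP H.
  suff -> : flag (@rem n t.+1) = flag (@rem n t) by [].
  have E : forall x y : 'I_n, rem t.+1 x y = rem t x y || (x != y) && (key n x y == t).
    by move=> x y; rewrite /rem /= ltnS leq_eqVlt andb_orr orbC.
  apply/setP => e; apply/flagP/flagP => He x y hx hy; have := He x y hx hy.
  + by rewrite E negb_or => /andP[].
  + move=> h; rewrite E negb_or h /=.
    by move: (H x); rewrite negb_exists => /forallP /(_ y).
Qed.

Theorem lemma5 (d : nat) :
  collapse_seq (simplex 'I_d.+1) (vertices_complex 'I_d.+1).
Proof.
have -> : vertices_complex 'I_d.+1 = flag (@rem d.+1 (d.+1 * d.+1)).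
  apply/setP => e; rewrite /vertices_complex in_setU1; apply/idP/flagP.
  - move=> /orP[/eqP ->|/imsetP [i _ ->]] x y; first by rewrite inE.
    by rewrite !inE => /eqP -> /eqP ->; rewrite rem_irr.
  - move=> He; case: (set_0Vmem e) => [->|[x xe]]; first by rewrite eqxx.
    apply/orP; right; apply/imsetP; exists x => //; apply/setP => y; rewrite !inE.
    apply/idP/eqP => [ye|->//]; apply/eqP; move: (He y x ye xe).
    rewrite /rem negb_and negbK => /orP[//|]; rewrite -leqNgt /key.
    have := ltn_ord x; have := ltn_ord y; move: (nat_of_ord x) (nat_of_ord y) => a b ha hb.
    have : minn b a <= d by lia.
    move=> hm; have := leq_mul2r d.+1 (minn b a) d; rewrite hm orbT => m. nia.
exact: main_t.
Qed.
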